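(* Let $\mathcal{D}$ be an abstract system of proof notations and $s\in\mathbb{N}$. If $\mathcal{D}$ is $s$-bounded and $d\in\mathbb{E}(\mathcal{D})$, then every $d'\in\mathbb{E}(\mathcal{D})$ with $d\to^\ast d'$ (reflexive transitive closure of $\to$ in $\mathbb{E}(\mathcal{D})$) satisfies $|d'|\le\vartheta_d(s)$; i.e. the set $\{d'\in\mathbb{E}(\mathcal{D}): d\to^\ast d'\}$ is $\vartheta_d(s)$-bounded.
   Context: An abstract system of proof notations is a set $\mathcal{D}$ with functions $|\cdot|,o(\cdot)\colon\mathcal{D}\to\mathbb{N}\setminus\{0\}$ (size and height) and a relation $\to\subseteq\mathcal{D}\times\mathcal{D}$ such that $d\to d'$ implies $o(d')<o(d)$. The cut-elimination closure $\mathbb{E}(\mathcal{D})$ is the abstract system of formal terms inductively generated by: every $d\in\mathcal{D}$ is in $\mathbb{E}(\mathcal{D})$ (with size and height inherited); if $d,e\in\mathbb{E}(\mathcal{D})$ then $\mathsf{I}d,\ \mathsf{R}de,\ \mathsf{E}d\in\mathbb{E}(\mathcal{D})$ ($\mathsf I,\mathsf R,\mathsf E$ new symbols), with $|\mathsf Id|=|d|+1$, $|\mathsf Rde|=|d|+|e|+1$, $|\mathsf Ed|=|d|+1$, $o(\mathsf Id)=o(d)$, $o(\mathsf Rde)=o(d)+o(e)$, $o(\mathsf Ed)=2^{o(d)}-1$. The relation $\to$ on $\mathbb{E}(\mathcal{D})$ is inductively generated by: $d\to d'$ in $\mathcal{D}$ implies $d\to d'$; $d\to d'$ implies $\mathsf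 Id\to\mathsf Id'$; $e\to e'$ implies $\mathsf Rde\to\mathsf Rde'$; $d\to d'$ implies $\mathsf Ed\to\mathsf Ed'$; $\mathsf Rde\to\mathsf Id$ always; and $d\to d'$ together with $d\to d''$ implies $\mathsf Ed\to\mathsf R(\mathsf Ed')(\mathsf Ed'')$. The size function $\vartheta_d\colon\mathbb{N}\to\mathbb{N}$ for $d\in\mathbb{E}(\mathcal{D})$ is defined by recursion: $\vartheta_d(s)=s$ for $d\in\mathcal{D}$; $\vartheta_{\mathsf Id}(s)=\vartheta_d(s)+1$; $\vartheta_{\mathsf Rde}(s)=\max\{|d|+1+\vartheta_e(s),\ \vartheta_d(s)+1\}$; $\vartheta_{\mathsf Ed}(s)=o(d)\cdot(\vartheta_d(s)+2)$. A set of notations is called $s$-bounded if all its elements have size at most $s$. *)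

(* Defs.v *)
From Stdlib Require Import Arith Relations.

Record APNS : Type := {
  carrier :> Type;
  size : carrier -> nat;
  height : carrier -> nat;
  step : carrier -> carrier -> Prop;
  size_pos : forall d, 0 < size d;
  height_pos : forall d, 0 < height d;
  step_height : forall d d', step d d' -> height d' < height d
}.

(** Cut-elimination closure E(D): formal terms. *)
Inductive ETerm (D : APNS) : Type :=
| Base : carrier D -> ETerm D
| TI : ETerm D -> ETerm D
| TR : ETerm D -> ETerm D -> ETerm D
| TE : ETerm D -> ETerm D.

Arguments Base {D} _.
Arguments TI {D} _.
Arguments TR {D} _ _.
Arguments TE {D} _.

Fixpoint esize {D : APNS} (t : ETerm D) : nat :=
  match t with
  | Base d => size D d
  | TI d => esize d + 1
  | TR d e => esize d + esize e + 1
  | TE d => esize d + 1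
  end.

Fixpoint eheight {D : APNS} (t : ETerm D) : nat :=
  match t with
  | Base d => height D d
  | TI d => eheight d
  | TR d e => eheight d + eheight e
  | TE d => 2 ^ eheight d - 1
  end.

Inductive estep {D : APNS} : ETerm D -> ETerm D -> Prop :=
| estep_base : forall d d', step D d d' -> estep (Base d) (Base d')
| estep_I : forall d d', estep d d' -> estep (TI d) (TI d')
| estep_R : forall d e e', estep e e' -> estep (TR d e) (TR d e')
| estep_E : forall d d', estep d d' -> estep (TE d) (TE d')
| estep_RI : forall d e, estep (TR d e) (TI d)
| estep_ER : forall d d' d'', estep d d' -> estep d d'' ->
    estep (TE d) (TR (TE d') (TE d'')).

Fixpoint theta {D : APNS} (t : ETerm D) (s : nat) : nat :=
  match t with
  | Base _ => s
  | TI d => theta d s + 1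
  | TR d e => Nat.max (esize d + 1 + theta e s) (theta d s + 1)
  | TE d => eheight d * (theta d s + 2)
  end.

Definition bounded {X : Type} (sz : X -> nat) (P : X -> Prop) (s : nat) : Prop :=
  forall x, P x -> sz x <= s.

Definition sbounded (D : APNS) (s : nat) : Prop :=
  bounded (size D) (fun _ => True) s.

(* Main.v *)
Require Import Defs.
From Stdlib Require Import Arith Relations Lia.

Lemma eheight_pos {D : APNS} (x : ETerm D) : 0 < eheight x.
Proof.
  induction x; simpl.
  - apply height_pos.
  - lia.
  - lia.
  - assert (2 ^ 1 <= 2 ^ eheight x) by (apply Nat.pow_le_mono_r; lia).
    simpl in H. lia.
Qed.

Lemma estep_height {D : APNS} (x y : ETerm D) : estep x y -> eheight y < eheight x.
Proof.
  induction 1; simpl.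
  - apply step_height; auto.
  - lia.
  - lia.
  - assert (2 ^ eheight d' < 2 ^ eheight d) by (apply Nat.pow_lt_mono_r; lia).
    assert (1 <= 2 ^ eheight d') by (change 1 with (2 ^ 0); apply Nat.pow_le_mono_r; lia). lia.
  - pose proof (eheight_pos e). lia.
  - set (h := eheight d) in *. set (a := eheight d') in *. set (b := eheight d'') in *.
    assert (2 ^ a <= 2 ^ (h - 1)) by (apply Nat.pow_le_mono_r; lia).
    assert (2 ^ b <= 2 ^ (h - 1)) by (apply Nat.pow_le_mono_r; lia).
    assert (2 ^ h = 2 * 2 ^ (h - 1)).
    { replace h with (S (h - 1)) at 1 by lia. reflexivity. }
    assert (1 <= 2 ^ a) by (change 1 with (2 ^ 0); apply Nat.pow_le_mono_r; lia).
    assert (1 <= 2 ^ b) by (change 1 with (2 ^ 0); apply Nat.pow_le_mono_r; lia).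
    lia.
Qed.

Lemma size_theta (D : APNS) (s : nat) : sbounded D s ->
  forall x : ETerm D, esize x <= theta x s.
Proof.
  intros Hs x; induction x; simpl.
  - apply Hs; auto.
  - lia.
  - lia.
  - pose proof (eheight_pos x).
    assert (1 * (theta x s + 2) <= eheight x * (theta x s + 2)) by (apply Nat.mul_le_mono_r; lia).
    lia.
Qed.

Lemma theta_mono (D : APNS) (s : nat) : sbounded D s ->
  forall x y : ETerm D, estep x y -> theta y s <= theta x s.
Proof.
  intros Hs x y H; induction H; simpl.
  - lia.
  - lia.
  - lia.
  - apply estep_height in H.
    apply Nat.mul_le_mono; lia.
  - lia.
  - pose proof (estep_height _ _ H) as Ha. pose proof (estep_height _ _ H0) as Hb.
    pose proof (size_theta D s Hs d').
    set (t := theta d s) in *.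
    assert (eheight d'' * (theta d'' s + 2) <= eheight d'' * (t + 2))
      by (apply Nat.mul_le_mono_l; lia).
    assert (eheight d' * (theta d' s + 2) <= eheight d' * (t + 2))
      by (apply Nat.mul_le_mono_l; lia).
    assert ((eheight d'' + 1) * (t + 2) <= eheight d * (t + 2))
      by (apply Nat.mul_le_mono_r; lia).
    assert ((eheight d' + 1) * (t + 2) <= eheight d * (t + 2))
      by (apply Nat.mul_le_mono_r; lia).
    apply Nat.max_lub; nia.
Qed.

Theorem mainTheorem6 (D : APNS) (s : nat) :
  sbounded D s ->
  forall d : ETerm D,
    bounded esize (fun d' => clos_refl_trans (ETerm D) estep d d') (theta d s).
Proof.
  intros Hs d d' Hr.
  assert (theta d' s <= theta d s).
  { induction Hr.
    - apply theta_mono; auto.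
    - lia.
    - lia. }
  pose proof (size_theta D s Hs d'). lia.
Qed.
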